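(* Let $Q=Q^+(5,q)$ be the non-degenerate hyperbolic quadric in $\mathrm{PG}(5,q)$ with associated polarity $\perp$, and let $\ell$ be a line of $\mathrm{PG}(5,q)$ disjoint from $Q$. Let $S$ be a line spread of the solid $\ell^\perp$. For every line $m\in S$, let $\mathcal{F}_m$ be the set of lines of $Q$ contained in the solid $\langle m,\ell\rangle$, and let $\mathcal{F}=\bigcup_{m\in S}\mathcal{F}_m$. Then $\mathcal{F}$ is a $(3,2)$-ovoid of $Q$, i.e. every plane contained in $Q$ contains precisely one line of $\mathcal{F}$.
   Context: Projective terminology is used: points, lines, planes and solids of $\mathrm{PG}(5,q)$ are subspaces of projective dimension $0,1,2,3$ (vector dimensions $1,2,3,4$). A line spread of a solid is a set of lines of the solid partitioning its points. The polarity $\perp$ is the one induced by the bilinear form associated to the quadratic form defining $Q$. The generators of $Q^+(5,q)$ are the planes contained in $Q$; a $(3,2)$-ovoid is a set of lines of $Q$ such that each such plane contains exactly one of them. *)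

(* Defs.v *)
(* Projective space PG(5,q) = subspaces of 'rV[F]_6, F a finite
   field; a subspace is represented by a square matrix (its row space). *)
From HB Require Import structures.
From mathcomp Require Import all_boot all_order all_algebra.
Set Implicit Arguments. Unset Strict Implicit. Unset Printing Implicit Defensive.
Import GRing.Theory.
Local Open Scope ring_scope.

Section Quadric.
Variable F : finFieldType.

(* Gram-type matrix of the standard hyperbolic form x0x1 + x2x3 + x4x5 *)
Definition hypM0 : 'M[F]_6 :=
  \matrix_(i, j) (odd j && (nat_of_ord j == (nat_of_ord i).+1))%:R.

(* The hyperbolic quadratic form transported by a change of coordinates A:
   Q_A(x) = std(x A).  Every non-degenerate hyperbolic quadric Q^+(5,q) is
   the zero set of Q_A for some invertible A. *)
Definition hypQ (A : 'M[F]_6) (x : 'rV[F]_6) : F :=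
  ((x *m A) *m hypM0 *m (x *m A)^T) 0 0.

Definition polB (A : 'M[F]_6) (x y : 'rV[F]_6) : F :=
  hypQ A (x + y) - hypQ A x - hypQ A y.

(* projective subspaces by projective dimension = rank - 1 *)
Definition is_line (U : 'M[F]_6) : bool := \rank U == 2%N.
Definition is_plane (U : 'M[F]_6) : bool := \rank U == 3%N.

Definition in_quadric (A : 'M[F]_6) (U : 'M[F]_6) : Prop :=
  forall v : 'rV[F]_6, (v <= U)%MS -> hypQ A v = 0.

Definition disjoint_quadric (A : 'M[F]_6) (U : 'M[F]_6) : Prop :=
  forall v : 'rV[F]_6, v != 0 -> (v <= U)%MS -> hypQ A v != 0.

Definition in_perp (A : 'M[F]_6) (U : 'M[F]_6) (v : 'rV[F]_6) : Prop :=
  forall u : 'rV[F]_6, (u <= U)%MS -> polB A v u = 0.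

Definition line_spread_of_perp (A : 'M[F]_6) (l : 'M[F]_6)
    (S : {set 'M[F]_6}) : Prop :=
  (forall m, m \in S -> is_line m /\ forall v, (v <= m)%MS -> in_perp A l v) /\
  (forall v : 'rV[F]_6, v != 0 -> in_perp A l v ->
     #|[set m in S | (v <= m)%MS]| = 1%N).

Definition in_family (A : 'M[F]_6) (l : 'M[F]_6) (S : {set 'M[F]_6})
    (L : 'M[F]_6) : Prop :=
  is_line L /\ in_quadric A L /\ exists2 m, m \in S & (L <= m + l)%MS.

End Quadric.

(* Main.v *)
Require Import Defs.
From HB Require Import structures.
From mathcomp Require Import all_boot all_order all_algebra.
From mathcomp Require Import ring zify.
Set Implicit Arguments. Unset Strict Implicit. Unset Printing Implicit Defensive.
Import GRing.Theory.
Local Open Scope ring_scope.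

Section S.
Variable F : finFieldType.
Implicit Types (A U : 'M[F]_6) (x y z v u : 'rV[F]_6) (c : F).

Lemma card_sub n (U : 'M[F]_n) : #|[set v : 'rV[F]_n | (v <= U)%MS]| = (#|F| ^ \rank U)%N.
Proof.
have inj : injective (fun w : 'rV[F]_(\rank U) => w *m row_base U).
  by apply: row_free_inj; rewrite row_base_free.
have -> : [set v : 'rV[F]_n | (v <= U)%MS] = [set w *m row_base U | w in [set: 'rV[F]_(\rank U)]].
  apply/setP => v; rewrite inE; apply/idP/imsetP.
    by rewrite -(eq_row_base U) => /submxP [w ->]; exists w; rewrite ?inE.
  by move=> [w _ ->]; rewrite -(eq_row_base U) submxMl.
by rewrite card_imset // cardsT card_mx mul1n.
Qed.

Definition Gm (A : 'M[F]_6) := A *m hypM0 F *m A^T.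
Definition Bm (A : 'M[F]_6) := Gm A + (Gm A)^T.

Lemma hypQE A x : hypQ A x = (x *m Gm A *m x^T) 0 0.
Proof. by rewrite /hypQ /Gm trmx_mul !mulmxA. Qed.

Lemma add00 (M N : 'M[F]_1) : (M + N) 0 0 = M 0 0 + N 0 0.
Proof. by rewrite mxE. Qed.

Lemma polBE A x y : polB A x y = (x *m Bm A *m y^T) 0 0.
Proof.
rewrite /polB !hypQE /Bm linearD /= !mulmxDl !mulmxDr !add00.
have -> : (y *m Gm A *m x^T) 0 0 = (x *m (Gm A)^T *m y^T) 0 0.
  have e : (y *m Gm A *m x^T) = (x *m (Gm A)^T *m y^T)^T.
    by rewrite !trmx_mul !trmxK mulmxA.
  by rewrite e mxE.
set a := (x *m Gm A *m x^T) 0 0; set b := (x *m Gm A *m y^T) 0 0.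
set c := (x *m (Gm A)^T *m y^T) 0 0; set d := (y *m Gm A *m y^T) 0 0.
rewrite mulmxDl add00 -/b -/c.
ring.
Qed.

Lemma hypQD A x y : hypQ A (x + y) = hypQ A x + hypQ A y + polB A x y.
Proof. rewrite /polB; ring. Qed.

Lemma polB_sym A x y : polB A x y = polB A y x.
Proof. rewrite /polB [y + x]addrC; ring. Qed.

Lemma hypQZ A c x : hypQ A (c *: x) = c ^+ 2 * hypQ A x.
Proof.
by rewrite !hypQE linearZ /= -!scalemxAl -scalemxAr scalerA mxE expr2.
Qed.

Lemma polB_same A x : polB A x x = 2%:R * hypQ A x.
Proof.
rewrite /polB.
have -> : x + x = 2%:R *: x by rewrite scalerDl scale1r.
rewrite hypQZ; ring.
Qed.

Lemma polBDl A x y z : polB A (x + y) z = polB A x z + polB A y z.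
Proof. by rewrite !polBE !mulmxDl add00. Qed.

Lemma polBZl A c x z : polB A (c *: x) z = c * polB A x z.
Proof. by rewrite !polBE -!scalemxAl mxE. Qed.

Lemma Bm_sym A : (Bm A)^T = Bm A.
Proof. by rewrite /Bm linearD /= trmxK addrC. Qed.

Definition Wp A (l : 'M[F]_6) := kermx (Bm A *m l^T).

Lemma in_perpE A l v : in_perp A l v <-> (v <= Wp A l)%MS.
Proof.
split.
  move=> H; rewrite sub_kermx; apply/eqP/matrixP => i j.
  rewrite [i]ord1 [RHS]mxE.
  have := H (row j l) (row_sub j l); rewrite polBE => <-.
  by rewrite tr_row colE !mulmxA -colE !mxE.
rewrite sub_kermx => /eqP H u /submxP [w ->].
by rewrite polBE trmx_mul mulmxA -(mulmxA v) H mul0mx mxE.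
Qed.

Lemma HH_inv : (hypM0 F + (hypM0 F)^T) *m (hypM0 F + (hypM0 F)^T) = 1%:M.
Proof.
apply/matrixP => i j; rewrite !mxE.
rewrite !big_ord_recr big_ord0 /= !mxE.
by case: i => [[|[|[|[|[|[|i]]]]]] Hi] //; case: j => [[|[|[|[|[|[|j]]]]]] Hj] //=;
  rewrite ?(mulr0, mul0r, mulr1, add0r, addr0).
Qed.

Lemma Bm_unit A : A \in unitmx -> Bm A \in unitmx.
Proof.
move=> uA.
have -> : Bm A = A *m (hypM0 F + (hypM0 F)^T) *m A^T.
  by rewrite /Bm /Gm !trmx_mul trmxK !mulmxA mulmxDr mulmxDl.
have [u1 _] := mulmx1_unit HH_inv.
by rewrite !unitmx_mul uA u1 unitmx_tr uA.
Qed.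

Lemma sq_onto (h2 : (2%:R : F) = 0) (y : F) : exists x : F, x ^+ 2 = y.
Proof.
have inj : injective (fun x : F => x ^+ 2).
  move=> x z /= e.
  have : (x - z) ^+ 2 = x ^+ 2 - z ^+ 2 + 2%:R * (z ^+ 2 - x * z) by ring.
  rewrite e subrr h2 mul0r addr0 => /eqP; rewrite expf_eq0 /= subr_eq0 => /eqP //.
have := injF_onto inj y; case/codomP => x ->; by exists x.
Qed.

Lemma Wl0 A l : is_line l -> disjoint_quadric A l ->
  forall v, (v <= Wp A l)%MS -> (v <= l)%MS -> v = 0.
Proof.
move=> Hl Hd v vW vl; apply/eqP/negPn/negP => v0.
have Qv := Hd v v0 vl.
have /in_perpE Pv := vW.
have h2 : (2%:R : F) = 0.
  have := Pv v vl; rewrite polB_same => /eqP; rewrite mulf_eq0 (negbTE Qv) orbF.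
  by move/eqP.
have : ~~ (l <= v)%MS.
  apply/negP => /mxrankS; rewrite (eqP Hl) => /leq_trans/(_ (rank_leq_row v)).
  done.
case/row_subPn => i bv.
set b := row i l.
have bl : (b <= l)%MS by apply: row_sub.
have [x ex] := sq_onto h2 (- hypQ A b / hypQ A v).
have : x *: v + b != 0.
  rewrite addrC addr_eq0; apply/negP => /eqP eb.
  by move: bv; rewrite -/b eb -scaleNr scalemx_sub.
move/Hd; rewrite addmx_sub ?scalemx_sub // => /(_ isT).
rewrite hypQD hypQZ polBZl (Pv b bl) mulr0 addr0 ex divfK // addNr eqxx //.
Qed.

Definition Nset (X : 'M[F]_6) := [set v : 'rV[F]_6 | (v != 0) && (v <= X)%MS].

Lemma card_Nset X : #|Nset X| = (#|F| ^ \rank X).-1.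
Proof.
rewrite -card_sub [in RHS](cardsD1 0) inE sub0mx add1n /=.
by apply: eq_card => v; rewrite !inE andbC.
Qed.

Lemma Nset_part (W X : 'M[F]_6) (S : {set 'M[F]_6}) : (X <= W)%MS ->
  (forall v : 'rV_6, v != 0 -> (v <= W)%MS -> #|[set m in S | (v <= m)%MS]| = 1%N) ->
  #|Nset X| = (\sum_(m in S) #|Nset (m :&: X)%MS|)%N.
Proof.
move=> XW HS.
rewrite -sum1_card.
rewrite (eq_bigr (fun v => \sum_(m | (m \in S) && (v <= m)%MS) 1)%N); last first.
  move=> v; rewrite inE => /andP [v0 vX].
  by rewrite sum1dep_card HS // (submx_trans vX XW).
rewrite (exchange_big_dep (fun m => m \in S)) /=; last by move=> v m _ /andP [].
apply: eq_bigr => m mS; rewrite sum1dep_card.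
apply: eq_card => v; rewrite !inE sub_capmx mS /=.
by case: (v != 0); case: (v <= m)%MS; case: (v <= X)%MS.
Qed.

Lemma spread_plane (W T : 'M[F]_6) (S : {set 'M[F]_6}) :
  \rank W = 4%N -> (T <= W)%MS -> \rank T = 3%N ->
  (forall m, m \in S -> \rank m = 2%N /\ (m <= W)%MS) ->
  (forall v : 'rV_6, v != 0 -> (v <= W)%MS -> #|[set m in S | (v <= m)%MS]| = 1%N) ->
  exists2 m, m \in S & (m <= T)%MS.
Proof.
move=> rW TW rT HSm HS.
case: (pickP (fun m => (m \in S) && (m <= T)%MS)) => [m /andP [mS mT] | Hn0].
  by exists m.
have Hn : forall m, m \in S -> ~~ (m <= T)%MS.
  by move=> m mS; apply/negP => mT; have := Hn0 m; rewrite mS mT.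
have q2 : (1 < #|F|)%N by apply: card_finNzRing_gt1.
have e1 := Nset_part (submx_refl W) HS.
have e2 := Nset_part TW HS.
rewrite (eq_bigr (fun _ => (#|F| ^ 2).-1)) in e1; last first.
  move=> m mS; rewrite card_Nset; have [r2 mW] := HSm m mS.
  have : \rank (m :&: W)%MS = \rank m by apply/eqmx_rank/eqmxP/capmx_idPl.
  by rewrite r2 => ->.
rewrite (eq_bigr (fun _ => (#|F| ^ 1).-1)) in e2; last first.
  move=> m mS; rewrite card_Nset; have [r2 mW] := HSm m mS.
  suff -> : \rank (m :&: T)%MS = 1%N by [].
  apply/eqP; rewrite eqn_leq; apply/andP; split.
    rewrite leqNgt; apply/negP => h.
    have : (\rank (m :&: T)%MS <= \rank m)%N by apply: mxrankS; apply: capmxSl.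
    rewrite r2 => h'.
    have r : \rank (m :&: T)%MS = \rank m by rewrite r2; apply/eqP; rewrite eqn_leq h'.
    have /eqP := r; rewrite (mxrank_leqif_sup (capmxSl m T)) => mmT.
    by move: (Hn m mS); rewrite (submx_trans mmT (capmxSr m T)).
  have := mxrank_sum_cap m T; rewrite r2 rT.
  have : (\rank (m + T) <= \rank W)%N by rewrite mxrankS // addsmx_sub mW.
  rewrite rW.
  lia.
rewrite !sum_nat_const !card_Nset rW rT in e1 e2.
move: e1 e2; set s := #|S|; set q := #|F|.
rewrite !expnS expn0 !muln1.
nia.
Qed.

Lemma disj_rank (U l : 'M[F]_6) : (forall v : 'rV_6, (v <= U)%MS -> (v <= l)%MS -> v = 0) ->
  \rank (U + l)%MS = (\rank U + \rank l)%N.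
Proof.
move=> H; apply: mxrank_disjoint_sum; apply/eqP/rowV0P => v.
by rewrite sub_capmx => /andP [vU vl]; apply: H.
Qed.
End S.

Ltac glia := repeat (match goal with |- context [\rank ?X] => generalize (\rank X) end);
  repeat (match goal with H : _ |- _ => clear H end); intros; lia.

Unset Implicit Arguments.

Theorem theorem4p7 (F : finFieldType) (A : 'M[F]_6) (l : 'M[F]_6)
    (S : {set 'M[F]_6}) :
  A \in unitmx ->
  is_line l -> disjoint_quadric A l ->
  line_spread_of_perp A l S ->
  forall P : 'M[F]_6, is_plane P -> in_quadric A P ->
    (exists L : 'M[F]_6, in_family A l S L /\ (L <= P)%MS) /\
    (forall L1 L2 : 'M[F]_6,
        in_family A l S L1 -> (L1 <= P)%MS ->
        in_family A l S L2 -> (L2 <= P)%MS -> (L1 == L2)%MS).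
Proof.
move=> uA Hl Hd [HS1 HS2] P HP HQP.
set W := Wp A l.
have WL0 := Wl0 Hl Hd.
have rl : \rank l = 2%N by apply/eqP.
have rP : \rank P = 3%N by apply/eqP.
have Pl0 : forall v : 'rV_6, (v <= P)%MS -> (v <= l)%MS -> v = 0.
  move=> v vP vl; apply/eqP/negPn/negP => v0.
  by have := Hd v v0 vl; rewrite HQP // eqxx.
have rW : \rank W = 4%N.
  have := disj_rank WL0; rewrite rl.
  have : (\rank (W + l) <= 6)%N by apply: rank_leq_col.
  have : (\rank (Bm A *m l^T) <= \rank l)%N by rewrite -(mxrank_tr l) mxrankM_maxr.
  rewrite rl.
  rewrite /W /Wp mxrank_ker.
  glia.
have rPl : \rank (P + l) = 5%N by rewrite disj_rank // rP rl.
have HSm : forall m, m \in S -> \rank m = 2%N /\ (m <= W)%MS.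
  move=> m mS; have [/eqP r2 H] := HS1 m mS; split => //.
  by apply/row_subP => i; apply/in_perpE; apply: H; apply: row_sub.
have HSv : forall v : 'rV_6, v != 0 -> (v <= W)%MS -> #|[set m in S | (v <= m)%MS]| = 1%N.
  by move=> v v0 /in_perpE; apply: HS2.
have Lrank : forall m (U : 'M[F]_6), m \in S -> (U <= P)%MS -> (U <= m + l)%MS -> (\rank U <= 2)%N.
  move=> m U mS UP Uml.
  have := disj_rank (fun v vU => Pl0 v (submx_trans vU UP)); rewrite rl.
  have : (\rank (U + l) <= \rank (m + l))%N by rewrite mxrankS // addsmx_sub Uml addsmxSr.
  have : (\rank (m + l) <= \rank m + \rank l)%N by apply: mxrank_adds_leqif.
  rewrite (HSm m mS).1 rl.
  glia.
have Lspan : forall m (U : 'M[F]_6), m \in S -> (U <= P)%MS -> (U <= m + l)%MS ->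
    \rank U = 2%N -> (m <= P + l)%MS.
  move=> m U mS UP Uml rU.
  have sub : (U + l <= m + l)%MS by rewrite addsmx_sub Uml addsmxSr.
  have r1 := disj_rank (fun v vU => Pl0 v (submx_trans vU UP)); rewrite rl rU in r1.
  have : (\rank (m + l) <= \rank m + \rank l)%N by apply: mxrank_adds_leqif.
  rewrite (HSm m mS).1 rl => r2.
  have : \rank (U + l) == \rank (m + l).
    by rewrite eqn_leq mxrankS // r1 (leq_trans r2).
  rewrite (mxrank_leqif_sup sub) => /(submx_trans (addsmxSl m l)) mUl.
  by apply: (submx_trans mUl); rewrite addsmx_sub addsmxSr (submx_trans UP) // addsmxSl.
split; last first.
  move=> L1 L2 [/eqP r1 [_ [m1 m1S L1m]]] L1P [/eqP r2 [_ [m2 m2S L2m]]] L2P.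
  have mP1 := Lspan m1 L1 m1S L1P L1m r1.
  have mP2 := Lspan m2 L2 m2S L2P L2m r2.
  case: (eqVneq (m1 :&: m2)%MS 0) => [m0 | /rowV0Pn [v vm v0]].
    have r12 : \rank (m1 + m2) = 4%N by rewrite mxrank_disjoint_sum // (HSm m1 m1S).1 (HSm m2 m2S).1.
    have W12 : (m1 + m2 <= W)%MS by rewrite addsmx_sub (HSm m1 m1S).2 (HSm m2 m2S).2.
    have := disj_rank (fun v vU => WL0 v (submx_trans vU W12)); rewrite r12 rl.
    have : (\rank (m1 + m2 + l) <= \rank (P + l))%N.
      by rewrite mxrankS // !addsmx_sub mP1 mP2 addsmxSr.
    by rewrite rPl => /[swap] ->.
  move: vm; rewrite sub_capmx => /andP [vm1 vm2].
  have := HSv v v0 (submx_trans vm1 (HSm m1 m1S).2) => /eqP /cards1P [x ex].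
  have : m1 \in [set x] by rewrite -ex inE m1S vm1.
  have : m2 \in [set x] by rewrite -ex inE m2S vm2.
  rewrite !inE => /eqP e2 /eqP e1; subst m1 m2.
  set X := (P :&: (x + l))%MS.
  have rX := Lrank x X m1S (capmxSl _ _) (capmxSr _ _).
  have L1X : (L1 <= X)%MS by rewrite sub_capmx L1P.
  have L2X : (L2 <= X)%MS by rewrite sub_capmx L2P.
  have XL1 : (X <= L1)%MS.
    by rewrite -(mxrank_leqif_sup L1X) eqn_leq r1 rX andbT; have := mxrankS L1X; rewrite r1.
  have XL2 : (X <= L2)%MS.
    by rewrite -(mxrank_leqif_sup L2X) eqn_leq r2 rX andbT; have := mxrankS L2X; rewrite r2.
  by apply/andP; split; [apply: submx_trans XL2 | apply: submx_trans XL1].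
have : (P :&: W)%MS != 0.
  rewrite -mxrank_eq0; have := mxrank_sum_cap P W; rewrite rP rW.
  have : (\rank (P + W) <= 6)%N by apply: rank_leq_col.
  glia.
case/rowV0Pn => p /[!sub_capmx] /andP [pP pW] p0.
set K := kermx (Bm A *m p^T).
set T := (W :&: K)%MS.
have TW : (T <= W)%MS by apply: capmxSl.
have lK : (l <= K)%MS.
  rewrite sub_kermx; move: pW; rewrite sub_kermx => /eqP pW.
  have e : l *m (Bm A *m p^T) = (p *m (Bm A *m l^T))^T by rewrite !trmx_mul trmxK Bm_sym !mulmxA.
  by rewrite e pW trmx0.
have rT : \rank T = 3%N.
  apply/eqP; rewrite eqn_leq; apply/andP; split.
    rewrite leqNgt; apply/negP => h.
    have : \rank T == \rank W by rewrite eqn_leq mxrankS // rW.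
    rewrite (mxrank_leqif_sup TW) sub_capmx submx_refl /= => WK.
    have : (1%:M <= K)%MS.
      apply: submx_trans (_ : (W + l <= K)%MS); last by rewrite addsmx_sub WK lK.
      by rewrite sub1mx /row_full disj_rank // rW rl.
    rewrite sub_kermx mul1mx => /eqP /(congr1 (mulmx (invmx (Bm A)))).
    rewrite mulKmx ?Bm_unit // mulmx0 => /(congr1 trmx); rewrite trmxK trmx0 => e.
    by move: p0; rewrite e eqxx.
  have := mxrank_sum_cap W K; rewrite rW -/T.
  have : (\rank (W + K) <= 6)%N by apply: rank_leq_col.
  have : (\rank (Bm A *m p^T) <= 1)%N.
    by apply: leq_trans (mxrankM_maxr _ _) _; rewrite mxrank_tr rank_leq_row.
  rewrite /K mxrank_ker.
  glia.
have [m mS mT] := spread_plane rW TW rT HSm HSv.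
have PlWT : ((P + l) :&: W <= T)%MS.
  rewrite sub_capmx capmxSr andTb.
  apply/row_subP => i; set v := row i _.
  have : (v <= (P + l) :&: W)%MS by apply: row_sub.
  rewrite sub_capmx => /andP [/sub_addsmxP [[a b] /= ev] _].
  rewrite sub_kermx; apply/eqP/matrixP => i0 j0; rewrite !ord1 [RHS]mxE mulmxA -polBE.
  have h2 : polB A (b *m l) p = 0.
    by rewrite polB_sym; apply: (proj2 (in_perpE A l p) pW); apply: submxMl.
  have h1 : polB A (a *m P) p = 0.
    by rewrite /polB !HQP ?addmx_sub ?submxMl // !subr0.
  by rewrite ev polBDl h1 h2 addr0.
have rPlW : (3 <= \rank ((P + l) :&: W))%N.
  have := mxrank_sum_cap (P + l)%MS W; rewrite rPl rW.
  have : (\rank ((P + l) + W) <= 6)%N by apply: rank_leq_col.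
  glia.
have TPlW : (T <= (P + l) :&: W)%MS.
  by rewrite -(mxrank_leqif_sup PlWT) eqn_leq mxrankS // rT.
have mPl : (m <= P + l)%MS.
  by apply: submx_trans mT (submx_trans TPlW (capmxSl _ _)).
set L := (P :&: (m + l))%MS.
have rml : \rank (m + l) = 4%N.
  by rewrite disj_rank ?(HSm m mS).1 ?rl // => v vm; apply: WL0; apply: submx_trans vm (HSm m mS).2.
have rL : \rank L = 2%N.
  apply/eqP; rewrite eqn_leq (Lrank m L mS (capmxSl _ _) (capmxSr _ _)) /=.
  have := mxrank_sum_cap P (m + l)%MS; rewrite rP rml -/L.
  have : (\rank (P + (m + l)) <= \rank (P + l))%N.
    by rewrite mxrankS // !addsmx_sub addsmxSl mPl addsmxSr.
  rewrite rPl.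
  glia.
exists L; split; last by apply: capmxSl.
split; first by rewrite /is_line rL.
split; first by move=> v vL; apply: HQP; apply: submx_trans vL (capmxSl _ _).
by exists m => //; apply: capmxSr.
Qed.
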